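(* For every $\alpha\in(0,\pi]$, \[ P(S_\alpha)=\frac{1}{\sin\frac{\alpha}{2}}. \]
   Context: For $\alpha\in(0,2\pi)$ the angular domain is $S_\alpha=\{re^{it}: r>0,\ t\in(0,\alpha)\}\subset\mathbb{C}$; its boundary in $\overline{\mathbb{C}}=\mathbb{C}\cup\{\infty\}$ is the Jordan curve consisting of the two rays from $0$ together with the points $0$ and $\infty$. For four distinct points $a,b,c,d\in\overline{\mathbb{C}}$ set $p(a,b,c,d)=\frac{|a-b||c-d|+|a-d||b-c|}{|a-c||b-d|}$, where if one of the points is $\infty$ the expression is understood as the limit (all factors containing $\infty$ cancelled). For a domain $D\subset\overline{\mathbb{C}}$ whose boundary is a Jordan curve, $P(D)=\sup p(a,b,c,d)$ over all distinct $a,b,c,d\in\partial D$ occurring in this order when $\partial D$ is traversed in the positive direction. *)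

(* Defs.v *)
From Stdlib Require Import Reals Lra.
Open Scope R_scope.

(* Points of the Riemann sphere: [Some (x,y)] is x+iy, [None] is infinity. *)
Definition C := (R * R)%type.
Definition Cext := option C.

Definition cdist (z w : C) : R :=
  sqrt ((fst z - fst w)^2 + (snd z - snd w)^2).

(* p(a,b,c,d); if one point is infinity, all factors containing it are
   cancelled (this is the limit). *)
Definition pfun (a b c d : Cext) : R :=
  match a, b, c, d with
  | Some a, Some b, Some c, Some d =>
      (cdist a b * cdist c d + cdist a d * cdist b c) / (cdist a c * cdist b d)
  | None, Some b, Some c, Some d => (cdist c d + cdist b c) / cdist b d
  | Some a, None, Some c, Some d => (cdist c d + cdist a d) / cdist a c
  | Some a, Some b, None, Some d => (cdist a b + cdist a d) / cdist b d
  | Some a, Some b, Some c, None => (cdist a b + cdist b c) / cdist a c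
  | _, _, _, _ => 0  (* not used: at most one point is infinity *)
  end.

(* Parametrization of the boundary of S_alpha (the Jordan curve made of the
   two rays, 0 and infinity), in the positive direction (domain on the left):
   parameter s < 0 gives |s| e^{i alpha} (coming in from infinity along the
   ray of angle alpha), s = 0 gives 0, s > 0 gives s on the positive real
   axis, and the extra parameter [None] (= +infinity) gives the point infinity.
   This is a bijection from option R onto the boundary of S_alpha. *)
Definition bpt (alpha : R) (k : option R) : Cext :=
  match k with
  | None => None
  | Some s =>
      if Rlt_dec s 0 then Some ((- s) * cos alpha, (- s) * sin alpha)
      else Some (s, 0)
  end.

Definition klt (k1 k2 : option R) : Prop :=
  match k1, k2 with
  | Some x, Some y => x < y
  | Some _, None => True
  | None, _ => False
  end.

Definition kinc (k1 k2 k3 k4 : option R) : Prop :=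
  klt k1 k2 /\ klt k2 k3 /\ klt k3 k4.

(* four distinct boundary points occur in this (cyclic) order when the curve
   is traversed in the positive direction *)
Definition pos_order (k1 k2 k3 k4 : option R) : Prop :=
  kinc k1 k2 k3 k4 \/ kinc k2 k3 k4 k1 \/ kinc k3 k4 k1 k2 \/ kinc k4 k1 k2 k3.

Definition Pvals (alpha : R) (v : R) : Prop :=
  exists k1 k2 k3 k4 : option R,
    pos_order k1 k2 k3 k4 /\
    v = pfun (bpt alpha k1) (bpt alpha k2) (bpt alpha k3) (bpt alpha k4).

Definition P_is (alpha : R) (l : R) : Prop := is_lub (Pvals alpha) l.

(* Main.v *)
Require Import Defs.
From Stdlib Require Import Reals Lra Psatz.
Open Scope R_scope.

Lemma cdist_sym z w : cdist z w = cdist w z.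
Proof. unfold cdist. f_equal. ring. Qed.

Lemma pfun_cyc a b c d : pfun a b c d = pfun b c d a.
Proof.
  destruct a as [a|], b as [b|], c as [c|], d as [d|]; simpl; try reflexivity.
  all: repeat match goal with
         | |- context [cdist ?y ?x] =>
             match goal with |- context [cdist x y] => rewrite (cdist_sym y x) end
         end.
  all: f_equal; ring.
Qed.

Definition lam (x : R) : R := if Rlt_dec x 0 then 0 else x.
Definition mu (x : R) : R := if Rlt_dec x 0 then - x else 0.

Lemma bpt_some a x : bpt a (Some x) = Some (lam x + mu x * cos a, mu x * sin a).
Proof. unfold bpt, lam, mu. destruct (Rlt_dec x 0); do 2 f_equal; ring. Qed.

Lemma lam_mu x : lam x - mu x = x.
Proof. unfold lam, mu. destruct (Rlt_dec x 0); ring. Qed.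
Lemma lam_ge0 x : 0 <= lam x.
Proof. unfold lam. destruct (Rlt_dec x 0); lra. Qed.
Lemma mu_ge0 x : 0 <= mu x.
Proof. unfold mu. destruct (Rlt_dec x 0); lra. Qed.
Lemma lam_mono x y : x < y -> lam x <= lam y.
Proof. unfold lam. destruct (Rlt_dec x 0), (Rlt_dec y 0); lra. Qed.
Lemma mu_mono x y : x < y -> mu y <= mu x.
Proof. unfold mu. destruct (Rlt_dec x 0), (Rlt_dec y 0); lra. Qed.
Lemma lm_prod x y z : x < y -> y < z -> (lam y - lam x) * (mu y - mu z) = 0.
Proof. unfold lam, mu. destruct (Rlt_dec x 0), (Rlt_dec y 0), (Rlt_dec z 0); intros; first [lra | ring]. Qed.

Definition Qf (c l m : R) : R := l*l + m*m - 2*c*l*m.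

Lemma cdist_pt c s lx mx ly my : c*c + s*s = 1 ->
  cdist (lx + mx*c, mx*s) (ly + my*c, my*s) = sqrt (Qf c (ly - lx) (mx - my)).
Proof.
  intro H. unfold cdist; cbn [fst snd]. f_equal.
  replace ((mx*s - my*s)^2) with ((mx-my)^2*(s*s)) by ring.
  replace (s*s) with (1 - c*c) by lra. unfold Qf. ring.
Qed.

Lemma sq_le a b : 0 <= b -> a*a <= b*b -> a <= b.
Proof. intros. nra. Qed.

Lemma sqrt2 A B : 0 <= A -> 0 <= B -> (sqrt A * sqrt B) * (sqrt A * sqrt B) = A*B.
Proof.
  intros. replace (sqrt A * sqrt B * (sqrt A * sqrt B)) with ((sqrt A*sqrt A)*(sqrt B*sqrt B)) by ring.
  rewrite !sqrt_sqrt; lra.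
Qed.

Lemma keyG c s sh A B C D E F R1 J :
  c*c + s*s = 1 -> -1 <= c -> 0 <= s -> 0 < sh -> sh*sh = (1-c)/2 ->
  0 <= A -> 0 <= B -> 0 <= C -> 0 <= D -> 0 < E -> 0 < F ->
  E*F = A*B + C*D + 2*R1 ->
  A*B*(C*D) = R1*R1 + (1-c*c)*(J*J) ->
  0 <= R1 + c*Rabs J -> (c < 0 -> 0 <= R1) ->
  (sqrt A * sqrt B + sqrt C * sqrt D) / (sqrt E * sqrt F) <= 1/sh.
Proof.
  intros Hcs Hc Hs Hsh Hsh2 HA HB HC HD HE HF H1 H2 H3 H4.
  assert (Hx := sqrt2 A B HA HB). assert (Hy := sqrt2 C D HC HD).
  assert (Hz := sqrt2 E F (Rlt_le _ _ HE) (Rlt_le _ _ HF)).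
  set (x := sqrt A * sqrt B) in *. set (y := sqrt C * sqrt D) in *.
  set (z := sqrt E * sqrt F) in *.
  assert (Hx0 : 0 <= x) by (unfold x; apply Rmult_le_pos; apply sqrt_pos).
  assert (Hy0 : 0 <= y) by (unfold y; apply Rmult_le_pos; apply sqrt_pos).
  assert (Hz0 : 0 < z) by (unfold z; apply Rmult_lt_0_compat; apply sqrt_lt_R0; lra).
  assert (HM : (x*y)*(x*y) = R1*R1 + (1-c*c)*(J*J)).
  { rewrite <- H2, <- Hx, <- Hy. ring. }
  set (M := x*y) in *.
  assert (HM0 : 0 <= M) by (unfold M; nra).
  assert (HJ : Rabs J * Rabs J = J*J) by (rewrite <- Rabs_mult; apply Rabs_right; nra).
  assert (HJ0 := Rabs_pos J).
  assert (Key : 0 <= R1 + c*M).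
  { destruct (Rle_lt_dec 0 c) as [Hc0|Hc0].
    - assert (CS : -c*R1 + s*s*Rabs J <= M).
      { apply sq_le; [exact HM0|]. rewrite HM.
        replace (1 - c*c) with (s*s) by lra.
        assert (0 <= (s*R1 + c*s*Rabs J)*(s*R1 + c*s*Rabs J)) by apply Rle_0_sqr.
        replace (J*J) with (Rabs J * Rabs J) by exact HJ.
        replace (R1*R1) with ((c*c+s*s)*(R1*R1)) by (rewrite Hcs; ring).
        nra. }
      assert (0 <= s*s*(R1 + c*Rabs J)) by (apply Rmult_le_pos; nra).
      nra.
    - specialize (H4 Hc0).
      assert (-c*M <= R1).
      { apply sq_le; [exact H4|].
        replace (- c * M * (- c * M)) with (c*c*(M*M)) by ring. rewrite HM.
        assert (c*c*(J*J) <= R1*R1).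
        { rewrite <- HJ. assert (0 <= -c*Rabs J) by nra. replace (c*c*(Rabs J*Rabs J)) with ((-c*Rabs J)*(-c*Rabs J)) by ring. apply Rmult_le_compat; lra. }
        nra. }
      lra. }
  assert (Hfin : (x+y)*sh <= z).
  { apply sq_le; [lra|].
    replace ((x+y)*sh*((x+y)*sh)) with ((x+y)*(x+y)*(sh*sh)) by ring.
    rewrite Hsh2, Hz, H1, <- Hx, <- Hy. unfold M in Key. assert (Hq: 0 <= (1+c)*((x-y)*(x-y))) by (apply Rmult_le_pos; [lra| apply Rle_0_sqr]). nra. }
  unfold Rdiv. rewrite Rmult_1_l.
  apply (Rmult_le_reg_r (z*sh)). nra.
  replace ((x+y) * / z * (z*sh)) with ((x+y)*sh) by (field; lra).
  replace (/ sh * (z*sh)) with z by (field; lra). exact Hfin.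
Qed.

Lemma Hlem p q r q' c : 0 <= p -> 0 <= q -> 0 <= r -> 0 <= q' -> -1 <= c -> c <= 1 ->
  0 <= (p*r + q*q' - c*(p*q'+q*r)) + c*Rabs (p*q' - q*r) /\
  (c < 0 -> 0 <= p*r + q*q' - c*(p*q'+q*r)).
Proof.
  intros Hp Hq Hr Hq' Hc1 Hc2. split.
  - destruct (Rcase_abs (p*q' - q*r)) as [Hn|Hn].
    + rewrite Rabs_left by exact Hn.
      assert (H2 : 2*(p*q') <= p*r + q*q').
      { destruct (Rle_lt_dec (p*q') 0). nra.
        apply sq_le. nra.
        assert (0 <= (p*r - q*q')*(p*r-q*q')) by apply Rle_0_sqr.
        assert (p*q'*(p*q') <= p*q'*(q*r)) by (apply Rmult_le_compat_l; lra).
        nra. }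
      assert (0 <= p*q') by nra.
      destruct (Rle_lt_dec 0 c); nra.
    + rewrite Rabs_right by exact Hn.
      assert (H2 : 2*(q*r) <= p*r + q*q').
      { destruct (Rle_lt_dec (q*r) 0). nra.
        apply sq_le. nra.
        assert (0 <= (p*r - q*q')*(p*r-q*q')) by apply Rle_0_sqr.
        assert (q*r*(q*r) <= q*r*(p*q')) by (apply Rmult_le_compat_l; lra).
        nra. }
      assert (0 <= q*r) by nra.
      destruct (Rle_lt_dec 0 c); nra.
  - intros. assert (0 <= p*q'+q*r) by nra. nra.
Qed.

Lemma Qf_nonneg c l m : -1 <= c -> c <= 1 -> 0 <= l -> 0 <= m -> 0 <= Qf c l m.
Proof.
  intros. unfold Qf.
  assert (0 <= (1-c)*((l+m)*(l+m))) by (apply Rmult_le_pos; [lra|apply Rle_0_sqr]).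
  assert (0 <= (1+c)*((l-m)*(l-m))) by (apply Rmult_le_pos; [lra|apply Rle_0_sqr]).
  nra.
Qed.

Lemma Qf_pos c l m : -1 <= c -> c < 1 -> 0 <= l -> 0 <= m -> 0 < l + m -> 0 < Qf c l m.
Proof.
  intros. unfold Qf.
  assert (0 < (1-c)*((l+m)*(l+m))) by (apply Rmult_lt_0_compat; nra).
  assert (0 <= (1+c)*((l-m)*(l-m))) by (apply Rmult_le_pos; [lra|apply Rle_0_sqr]).
  nra.
Qed.

Lemma four c s sh l1 l2 l3 m1 m2 m3 :
  c*c + s*s = 1 -> -1 <= c -> c < 1 -> 0 <= s -> 0 < sh -> sh*sh = (1-c)/2 ->
  0 <= l1 -> 0 <= l2 -> 0 <= l3 -> 0 <= m1 -> 0 <= m2 -> 0 <= m3 ->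
  l1*m2 = 0 -> l2*m3 = 0 -> l1*m3 = 0 ->
  0 < l1+l2+(m1+m2) -> 0 < l2+l3+(m2+m3) ->
  (sqrt (Qf c l1 m1) * sqrt (Qf c l3 m3) +
   sqrt (Qf c (l1+l2+l3) (m1+m2+m3)) * sqrt (Qf c l2 m2)) /
  (sqrt (Qf c (l1+l2) (m1+m2)) * sqrt (Qf c (l2+l3) (m2+m3))) <= 1/sh.
Proof.
  intros Hcs Hc1 Hc2 Hs Hsh Hsh2 L1 L2 L3 M1 M2 M3 P12 P23 P13 D1 D2.
  set (p := l1*l2 + m1*m2). set (q := m1*l2).
  set (r := l3*(l1+l2+l3) + m3*(m1+m2+m3) - 2*c*m3*(l1+l2+l3)).
  set (q' := l3*(m1+m2+m3) - m3*(l1+l2+l3)).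
  assert (Hp : 0 <= p) by (unfold p; nra).
  assert (Hq : 0 <= q) by (unfold q; nra).
  assert (Hrq : 0 <= r /\ 0 <= q').
  { unfold r, q'.
    destruct (Rmult_integral _ _ P23) as [E2|E2]; destruct (Rmult_integral _ _ P13) as [E3|E3];
      subst; split; try nra.
    all: assert (0 <= (l3-m3)*(l3-m3)) by apply Rle_0_sqr; assert (0 <= (1-c)*(l3*m3)) by (apply Rmult_le_pos; nra); assert (0 <= m3*(m1+m2)) by nra; nra. }
  destruct Hrq as [Hr Hq'].
  destruct (Hlem p q r q' c Hp Hq Hr Hq' Hc1 (Rlt_le _ _ Hc2)) as [H1 H2].
  apply (keyG c s sh _ _ _ _ _ _ (p*r + q*q' - c*(p*q'+q*r)) (p*q' - q*r)); try assumption.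
  all: try (apply Qf_nonneg; lra).
  all: try (apply Qf_pos; lra).
  all: unfold p, q, r, q', Qf; clear - P12 P23 P13;
    destruct (Rmult_integral _ _ P12) as [E1|E1];
    destruct (Rmult_integral _ _ P23) as [E2|E2]; destruct (Rmult_integral _ _ P13) as [E3|E3];
    subst; ring.
Qed.

Lemma three c s sh l1 l2 m1 m2 :
  c*c + s*s = 1 -> -1 <= c -> c < 1 -> 0 <= s -> 0 < sh -> sh*sh = (1-c)/2 ->
  0 <= l1 -> 0 <= l2 -> 0 <= m1 -> 0 <= m2 -> l1*m2 = 0 ->
  0 < l1+l2+(m1+m2) ->
  (sqrt (Qf c l1 m1) + sqrt (Qf c l2 m2)) / sqrt (Qf c (l1+l2) (m1+m2)) <= 1/sh.
Proof.
  intros Hcs Hc1 Hc2 Hs Hsh Hsh2 L1 L2 M1 M2 P12 D1.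
  set (p := l1*l2 + m1*m2). set (q := m1*l2).
  assert (Hp : 0 <= p) by (unfold p; nra).
  assert (Hq : 0 <= q) by (unfold q; nra).
  destruct (Hlem p q 1 0 c Hp Hq ltac:(lra) ltac:(lra) Hc1 (Rlt_le _ _ Hc2)) as [H1 H2].
  replace (sqrt (Qf c l1 m1)) with (sqrt (Qf c l1 m1) * sqrt 1) by (rewrite sqrt_1; ring).
  replace (sqrt (Qf c l2 m2)) with (sqrt (Qf c l2 m2) * sqrt 1) by (rewrite sqrt_1; ring).
  replace (sqrt (Qf c (l1+l2) (m1+m2))) with (sqrt (Qf c (l1+l2) (m1+m2)) * sqrt 1) by (rewrite sqrt_1; ring).
  apply (keyG c s sh _ _ _ _ _ _ (p*1 + q*0 - c*(p*0+q*1)) (p*0 - q*1)); try assumption.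
  all: try (apply Qf_nonneg; lra).
  all: try (apply Qf_pos; lra).
  all: try lra.
  all: unfold p, q, Qf; clear - P12;
    destruct (Rmult_integral _ _ P12) as [E1|E1]; subst; ring.
Qed.

Lemma trig_facts alpha : 0 < alpha -> alpha <= PI ->
  cos alpha * cos alpha + sin alpha * sin alpha = 1 /\ -1 <= cos alpha /\ cos alpha < 1 /\
  0 <= sin alpha /\ 0 < sin (alpha/2) /\ sin (alpha/2) * sin (alpha/2) = (1 - cos alpha)/2.
Proof.
  intros H0 H1.
  assert (Hsh : 0 < sin (alpha/2)) by (apply sin_gt_0; lra).
  assert (Hc : cos alpha = 1 - 2 * sin (alpha/2) * sin (alpha/2)).
  { replace alpha with (2*(alpha/2)) at 1 by field. apply cos_2a_sin. }
  assert (Hb := COS_bound alpha).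
  assert (Hs := sin_ge_0 alpha ltac:(lra) H1).
  assert (H2 := sin2_cos2 alpha). unfold Rsqr in H2.
  repeat split; try lra. nra.
Qed.

Lemma ub_kinc alpha k1 k2 k3 k4 : 0 < alpha -> alpha <= PI -> kinc k1 k2 k3 k4 ->
  pfun (bpt alpha k1) (bpt alpha k2) (bpt alpha k3) (bpt alpha k4) <= 1 / sin (alpha/2).
Proof.
  intros H0 H1 [K12 [K23 K34]].
  destruct (trig_facts alpha H0 H1) as [Hcs [Hc1 [Hc2 [Hs [Hsh Hsh2]]]]].
  destruct k1 as [x1|]; [|contradiction]. destruct k2 as [x2|]; [|contradiction].
  destruct k3 as [x3|]; [|contradiction]. simpl in K12, K23.
  assert (A1 := lam_mu x1). assert (A2 := lam_mu x2). assert (A3 := lam_mu x3).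
  assert (G1 := lam_mono _ _ K12). assert (G2 := lam_mono _ _ K23).
  assert (N1 := mu_mono _ _ K12). assert (N2 := mu_mono _ _ K23).
  assert (P12 := lm_prod _ _ _ K12 K23).
  destruct k4 as [x4|].
  - simpl in K34. assert (A4 := lam_mu x4). assert (G3 := lam_mono _ _ K34).
    assert (N3 := mu_mono _ _ K34).
    assert (P23 := lm_prod _ _ _ K23 K34).
    assert (P14 := lm_prod _ _ _ K12 (Rlt_trans _ _ _ K23 K34)).
    assert (P13 : (lam x2 - lam x1) * (mu x3 - mu x4) = 0).
    { destruct (Rmult_integral _ _ P14) as [E|E]. rewrite E; ring.
      replace (mu x3 - mu x4) with 0 by lra. ring. }
    rewrite !bpt_some. cbn [pfun].
    rewrite !(cdist_pt (cos alpha) (sin alpha)) by exact Hcs.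
    replace (lam x4 - lam x1) with ((lam x2 - lam x1) + (lam x3 - lam x2) + (lam x4 - lam x3)) by ring.
    replace (mu x1 - mu x4) with ((mu x1 - mu x2) + (mu x2 - mu x3) + (mu x3 - mu x4)) by ring.
    replace (lam x3 - lam x1) with ((lam x2 - lam x1) + (lam x3 - lam x2)) by ring.
    replace (mu x1 - mu x3) with ((mu x1 - mu x2) + (mu x2 - mu x3)) by ring.
    replace (lam x4 - lam x2) with ((lam x3 - lam x2) + (lam x4 - lam x3)) by ring.
    replace (mu x2 - mu x4) with ((mu x2 - mu x3) + (mu x3 - mu x4)) by ring.
    apply (four _ (sin alpha)); try assumption; lra.
  - rewrite !bpt_some. cbn [pfun bpt].
    rewrite !(cdist_pt (cos alpha) (sin alpha)) by exact Hcs.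
    replace (lam x3 - lam x1) with ((lam x2 - lam x1) + (lam x3 - lam x2)) by ring.
    replace (mu x1 - mu x3) with ((mu x1 - mu x2) + (mu x2 - mu x3)) by ring.
    apply (three _ (sin alpha)); try assumption; lra.
Qed.

Theorem theorem3p6 (alpha : R) (h0 : 0 < alpha) (h1 : alpha <= PI) :
  P_is alpha (1 / sin (alpha / 2)).
Proof.
  destruct (trig_facts alpha h0 h1) as [Hcs [Hc1 [Hc2 [Hs [Hsh Hsh2]]]]].
  split.
  - intros v [k1 [k2 [k3 [k4 [Ho ->]]]]].
    destruct Ho as [K|[K|[K|K]]].
    + apply ub_kinc; assumption.
    + rewrite pfun_cyc. apply ub_kinc; assumption.
    + rewrite pfun_cyc, pfun_cyc. apply ub_kinc; assumption.
    + rewrite pfun_cyc, pfun_cyc, pfun_cyc. apply ub_kinc; assumption.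
  - intros b Hb. apply Hb.
    exists (Some (-1)), (Some 0), (Some 1), None. split.
    + left. repeat split; simpl; lra.
    + unfold bpt. destruct (Rlt_dec (-1) 0); [|lra].
      destruct (Rlt_dec 0 0); [lra|]. destruct (Rlt_dec 1 0); [lra|].
      cbn [pfun]. unfold cdist; cbn [fst snd].
      replace ((- -1 * cos alpha - 0) ^ 2 + (- -1 * sin alpha - 0) ^ 2) with 1 by nra.
      replace ((0 - 1) ^ 2 + (0 - 0) ^ 2) with 1 by ring.
      replace ((- -1 * cos alpha - 1) ^ 2 + (- -1 * sin alpha - 0) ^ 2)
        with ((2 * sin (alpha/2)) * (2 * sin (alpha/2))) by nra.
      rewrite sqrt_1, sqrt_square by lra. field. lra.
Qed.
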